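(* For $n\ge2$, the assignment $\lambda_{kl}\mapsto\lambda_{kl}$ ($1\le k\ne l\le n$) defines an injective homomorphism from the virtual pure braid group $VP_n$ into $PL_n\le TVP_n$. In particular, $VP_n$ is isomorphic to the subgroup of $TVP_n$ generated by the elements $\lambda_{kl}$, $1\le k\neq l\le n$.
   Context: For $n\ge 2$, the twisted virtual braid group $TVB_n$ is the group with generators $\sigma_1,\dots,\sigma_{n-1}$, $\rho_1,\dots,\rho_{n-1}$, $\gamma_1,\dots,\gamma_n$ and defining relations: $\sigma_i\sigma_{i+1}\sigma_i=\sigma_{i+1}\sigma_i\sigma_{i+1}$ ($1\le i\le n-2$); $\sigma_i\sigma_j=\sigma_j\sigma_i$ ($|i-j|\ge 2$); $\rho_i^2=1$; $\rho_i\rho_j=\rho_j\rho_i$ ($|i-j|\ge2$); $\rho_i\rho_{i+1}\rho_i=\rho_{i+1}\rho_i\rho_{i+1}$ ($1\le i\le n-2$); $\sigma_i\rho_j=\rho_j\sigma_i$ ($|i-j|\ge 2$); $\rho_i\rho_{i+1}\sigma_i=\sigma_{i+1}\rho_i\rho_{i+1}$ ($1\le i\le n-2$); $\gamma_i^2=1$ and $\gamma_i\gamma_j=\gamma_j\gamma_i$ (all $i,j$); $\gamma_j\rho_i=\rho_i\gamma_j$ and $\gamma_j\sigma_i=\sigma_i\gamma_j$ for $j\notin\{i,i+1\}$; $\rho_i\gamma_i=\gamma_{i+1}\rho_i$ ($1\le i\le n-1$); $\rho_i\sigma_i\rho_i=\gamma_{i+1}\gamma_i\sigma_i\gamma_i\gamma_{i+1}$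 ($1\le i\le n-1$). $TVP_n$ is the kernel of $\varphi_P:TVB_n\to S_n$, $\sigma_i,\rho_i\mapsto(i,i+1)$, $\gamma_j\mapsto e$. In $TVB_n$ define $\lambda_{i,i+1}=\rho_i\sigma_i^{-1}$, $\lambda_{i+1,i}=\rho_i\lambda_{i,i+1}\rho_i$ ($1\le i\le n-1$), and for $1\le i<j-1\le n-1$: $\lambda_{ij}=\rho_{j-1}\cdots\rho_{i+1}\lambda_{i,i+1}\rho_{i+1}\cdots\rho_{j-1}$, $\lambda_{ji}=\rho_{j-1}\cdots\rho_{i+1}\lambda_{i+1,i}\rho_{i+1}\cdots\rho_{j-1}$. $A_n=\langle\gamma_1,\dots,\gamma_n\rangle$; $\psi_P:TVP_n\to A_n$ is the homomorphism with $\lambda_{kl}\mapsto e$, $\gamma_j\mapsto\gamma_j$; $PL_n=\ker\psi_P$. The virtual pure braid group $VP_n$ is the abstract group with generators $\lambda_{ij}$, $1\le i\ne j\le n$, and defining relations $\lambda_{ij}\lambda_{kl}=\lambda_{kl}\lambda_{ij}$ and $\lambda_{ki}\lambda_{kj}\lambda_{ij}=\lambda_{ij}\lambda_{kj}\lambda_{ki}$, where distinct letters denote distinct indices. *)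

(* Defs.v *)
From Stdlib Require Import List Arith.
Import ListNotations.

(* A word over an alphabet A: letters (b, a), where b = true means a^{-1}. *)
Definition word (A : Type) := list (bool * A).

Definition winv {A : Type} (w : word A) : word A :=
  rev (map (fun p => (negb (fst p), snd p)) w).

Inductive grp_eq {A : Type} (R : word A -> word A -> Prop) : word A -> word A -> Prop :=
| ge_refl : forall w, grp_eq R w w
| ge_sym : forall u v, grp_eq R u v -> grp_eq R v u
| ge_trans : forall u v x, grp_eq R u v -> grp_eq R v x -> grp_eq R u x
| ge_cancel : forall u v b a, grp_eq R (u ++ (b, a) :: (negb b, a) :: v) (u ++ v)
| ge_rel : forall u v l r, R l r -> grp_eq R (u ++ l ++ v) (u ++ r ++ v).

Inductive tgen := Sg (i : nat) | Rh (i : nat) | Gm (j : nat).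

Definition L (x : tgen) : bool * tgen := (false, x).
Definition Li (x : tgen) : bool * tgen := (true, x).

Definition far (i j : nat) : Prop := i + 2 <= j \/ j + 2 <= i.

Inductive tvb_rel (n : nat) : word tgen -> word tgen -> Prop :=
| r_braid : forall i, 1 <= i -> i <= n - 2 ->
    tvb_rel n [L (Sg i); L (Sg (S i)); L (Sg i)] [L (Sg (S i)); L (Sg i); L (Sg (S i))]
| r_scomm : forall i j, 1 <= i <= n - 1 -> 1 <= j <= n - 1 -> far i j ->
    tvb_rel n [L (Sg i); L (Sg j)] [L (Sg j); L (Sg i)]
| r_rsq : forall i, 1 <= i <= n - 1 -> tvb_rel n [L (Rh i); L (Rh i)] []
| r_rcomm : forall i j, 1 <= i <= n - 1 -> 1 <= j <= n - 1 -> far i j ->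
    tvb_rel n [L (Rh i); L (Rh j)] [L (Rh j); L (Rh i)]
| r_rbraid : forall i, 1 <= i -> i <= n - 2 ->
    tvb_rel n [L (Rh i); L (Rh (S i)); L (Rh i)] [L (Rh (S i)); L (Rh i); L (Rh (S i))]
| r_srcomm : forall i j, 1 <= i <= n - 1 -> 1 <= j <= n - 1 -> far i j ->
    tvb_rel n [L (Sg i); L (Rh j)] [L (Rh j); L (Sg i)]
| r_mixed : forall i, 1 <= i -> i <= n - 2 ->
    tvb_rel n [L (Rh i); L (Rh (S i)); L (Sg i)] [L (Sg (S i)); L (Rh i); L (Rh (S i))]
| r_gsq : forall i, 1 <= i <= n -> tvb_rel n [L (Gm i); L (Gm i)] []
| r_gcomm : forall i j, 1 <= i <= n -> 1 <= j <= n ->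
    tvb_rel n [L (Gm i); L (Gm j)] [L (Gm j); L (Gm i)]
| r_grcomm : forall i j, 1 <= i <= n - 1 -> 1 <= j <= n -> j <> i -> j <> S i ->
    tvb_rel n [L (Gm j); L (Rh i)] [L (Rh i); L (Gm j)]
| r_gscomm : forall i j, 1 <= i <= n - 1 -> 1 <= j <= n -> j <> i -> j <> S i ->
    tvb_rel n [L (Gm j); L (Sg i)] [L (Sg i); L (Gm j)]
| r_rg : forall i, 1 <= i <= n - 1 ->
    tvb_rel n [L (Rh i); L (Gm i)] [L (Gm (S i)); L (Rh i)]
| r_twist : forall i, 1 <= i <= n - 1 ->
    tvb_rel n [L (Rh i); L (Sg i); L (Rh i)]
              [L (Gm (S i)); L (Gm i); L (Sg i); L (Gm i); L (Gm (S i))].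

Definition tvb_eq (n : nat) : word tgen -> word tgen -> Prop := grp_eq (tvb_rel n).

(* The permutation phi_P : TVB_n -> S_n, sigma_i, rho_i |-> (i,i+1), gamma_j |-> e,
   applied to a point m (transpositions are involutions, so inverses act alike). *)
Definition tswap (i m : nat) : nat :=
  if Nat.eqb m i then S i else if Nat.eqb m (S i) then i else m.

Definition gen_act (x : tgen) (m : nat) : nat :=
  match x with Sg i => tswap i m | Rh i => tswap i m | Gm _ => m end.

Definition perm_act (w : word tgen) (m : nat) : nat :=
  fold_right (fun p m => gen_act (snd p) m) m w.

(* w represents an element of TVP_n = ker phi_P *)
Definition in_TVP (n : nat) (w : word tgen) : Prop :=
  forall m, 1 <= m <= n -> perm_act w m = m.

(* lambda_{i,i+1} = rho_i sigma_i^{-1} *)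
Definition lam_up (i : nat) : word tgen := [L (Rh i); Li (Sg i)].
(* lambda_{i+1,i} = rho_i lambda_{i,i+1} rho_i *)
Definition lam_down (i : nat) : word tgen := [L (Rh i)] ++ lam_up i ++ [L (Rh i)].
(* rho_{j-1} ... rho_{i+1} *)
Definition rhoseq (i j : nat) : word tgen :=
  map (fun k => L (Rh k)) (rev (seq (S i) (j - S i))).

Definition lam (k l : nat) : word tgen :=
  if k <? l then rhoseq k l ++ lam_up k ++ rev (rhoseq k l)
  else rhoseq l k ++ lam_down l ++ rev (rhoseq l k).

(* generator (i, j) stands for lambda_{ij} *)
Definition vgen := (nat * nat)%type.
Definition V (i j : nat) : bool * vgen := (false, (i, j)).

Definition idx (n i : nat) : Prop := 1 <= i <= n.

Inductive vp_rel (n : nat) : word vgen -> word vgen -> Prop :=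
| v_comm : forall i j k l, idx n i -> idx n j -> idx n k -> idx n l ->
    i <> j -> i <> k -> i <> l -> j <> k -> j <> l -> k <> l ->
    vp_rel n [V i j; V k l] [V k l; V i j]
| v_yb : forall i j k, idx n i -> idx n j -> idx n k ->
    i <> j -> i <> k -> j <> k ->
    vp_rel n [V k i; V k j; V i j] [V i j; V k j; V k i].

Definition vp_eq (n : nat) : word vgen -> word vgen -> Prop := grp_eq (vp_rel n).

Definition vp_valid (n : nat) (w : word vgen) : Prop :=
  forall b i j, In (b, (i, j)) w -> idx n i /\ idx n j /\ i <> j.

Definition phi (w : word vgen) : word tgen :=
  flat_map (fun p : bool * vgen => let '(b, (k, l)) := p in
                     if b then winv (lam k l) else lam k l) w.

(* Main.v *)
Require Import Defs.
From Stdlib Require Import List Arith Lia Setoid Morphisms Bool FunctionalExtensionality.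
Import ListNotations.


Section Gen.
Context {A : Type} (R : word A -> word A -> Prop).

Lemma ge_ctx : forall u v, grp_eq R u v -> forall x y, grp_eq R (x ++ u ++ y) (x ++ v ++ y).
Proof.
  induction 1; intros x0 y0.
  - apply ge_refl.
  - apply ge_sym; auto.
  - eapply ge_trans; eauto.
  - replace (x0 ++ (u ++ (b, a) :: (negb b, a) :: v) ++ y0)
      with ((x0 ++ u) ++ (b, a) :: (negb b, a) :: (v ++ y0))
      by (rewrite <- !app_assoc; reflexivity).
    replace (x0 ++ (u ++ v) ++ y0) with ((x0 ++ u) ++ (v ++ y0))
      by (rewrite <- !app_assoc; reflexivity).
    apply ge_cancel.
  - replace (x0 ++ (u ++ l ++ v) ++ y0) with ((x0 ++ u) ++ l ++ (v ++ y0))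
      by (rewrite <- !app_assoc; reflexivity).
    replace (x0 ++ (u ++ r ++ v) ++ y0) with ((x0 ++ u) ++ r ++ (v ++ y0))
      by (rewrite <- !app_assoc; reflexivity).
    apply ge_rel; auto.
Qed.

Global Instance ge_equiv : Equivalence (grp_eq R).
Proof.
  split.
  - intro; apply ge_refl.
  - intros ? ?; apply ge_sym.
  - intros ? ? ?; apply ge_trans.
Qed.

Global Instance ge_app : Proper (grp_eq R ==> grp_eq R ==> grp_eq R) (@app (bool * A)).
Proof.
  intros u u' Hu v v' Hv.
  transitivity (u' ++ v).
  - pose proof (ge_ctx _ _ Hu [] v) as H. simpl in H. exact H.
  - pose proof (ge_ctx _ _ Hv u' []) as H. rewrite !app_nil_r in H. exact H.
Qed.

Global Instance ge_cons : Proper (eq ==> grp_eq R ==> grp_eq R) (@cons (bool * A)).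
Proof.
  intros a b <- u v H. change (a :: u) with ([a] ++ u). change (a :: v) with ([a] ++ v).
  rewrite H. reflexivity.
Qed.

Lemma winv_app : forall u v : word A, winv (u ++ v) = winv v ++ winv u.
Proof. intros. unfold winv. rewrite map_app, rev_app_distr. reflexivity. Qed.

Lemma winv_cons : forall (a : bool * A) u, winv (a :: u) = winv u ++ [(negb (fst a), snd a)].
Proof. intros. reflexivity. Qed.

Lemma winv_invol : forall u : word A, winv (winv u) = u.
Proof.
  intros u. unfold winv. rewrite map_rev, rev_involutive, map_map.
  rewrite <- (map_id u) at 2. apply map_ext. intros [b a]. simpl. rewrite negb_involutive. reflexivity.
Qed.

Lemma inv_l : forall u, grp_eq R (winv u ++ u) [].
Proof.
  induction u as [|[b a] u IH].
  - apply ge_refl.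
  - rewrite winv_cons. simpl. rewrite <- app_assoc. simpl.
    transitivity (winv u ++ u).
    + pose proof (ge_cancel R (winv u) u (negb b) a) as H. rewrite negb_involutive in H. exact H.
    + exact IH.
Qed.

Lemma inv_r : forall u, grp_eq R (u ++ winv u) [].
Proof.
  intros u. pose proof (inv_l (winv u)) as H. rewrite winv_invol in H. exact H.
Qed.

Lemma cancel_left : forall c u v, grp_eq R (c ++ u) (c ++ v) -> grp_eq R u v.
Proof.
  intros c u v H.
  transitivity ((winv c ++ c) ++ u). { rewrite inv_l. reflexivity. }
  transitivity ((winv c ++ c) ++ v). 2: { rewrite inv_l. reflexivity. }
  rewrite <- !app_assoc. rewrite H. reflexivity.
Qed.

Lemma rel_inv : forall l r, R l r -> grp_eq R (winv l) (winv r).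
Proof.
  intros l r H.
  transitivity (winv l ++ r ++ winv r). { rewrite inv_r, app_nil_r. reflexivity. }
  transitivity (winv l ++ l ++ winv r).
  { apply ge_sym. pose proof (ge_rel R (winv l) (winv r) l r H). exact H0. }
  rewrite app_assoc, inv_l. reflexivity.
Qed.

Lemma ge_inv : forall u v, grp_eq R u v -> grp_eq R (winv u) (winv v).
Proof.
  induction 1.
  - reflexivity.
  - symmetry; auto.
  - etransitivity; eauto.
  - rewrite !winv_app. rewrite !winv_cons. simpl. rewrite negb_involutive, <- !app_assoc. simpl.
    apply ge_cancel.
  - rewrite !winv_app. rewrite (rel_inv _ _ H). reflexivity.
Qed.

Lemma rel_t : forall l r, R l r -> forall t, grp_eq R (l ++ t) (r ++ t).
Proof. intros. apply (ge_rel R [] t l r H). Qed.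

Lemma rel_inv_t : forall l r, R l r -> forall t, grp_eq R (winv l ++ t) (winv r ++ t).
Proof. intros. rewrite (rel_inv _ _ H). reflexivity. Qed.

End Gen.


Section T.
Variable n : nat.
Local Notation teq := (grp_eq (tvb_rel n)).

Lemma rr : forall i t, 1 <= i <= n - 1 -> teq (L (Rh i) :: L (Rh i) :: t) t.
Proof. intros. exact (rel_t _ _ _ (r_rsq n i H) t). Qed.

Lemma rinv : forall i t, 1 <= i <= n - 1 -> teq (Li (Rh i) :: t) (L (Rh i) :: t).
Proof.
  intros i t H. rewrite <- (rr i t H) at 1.
  pose proof (ge_cancel (tvb_rel n) [] (L (Rh i) :: t) true (Rh i)). simpl in H0. exact H0.
Qed.

Lemma rcomm : forall i j t, 1 <= i <= n - 1 -> 1 <= j <= n - 1 -> far i j ->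
  teq (L (Rh i) :: L (Rh j) :: t) (L (Rh j) :: L (Rh i) :: t).
Proof. intros. exact (rel_t _ _ _ (r_rcomm n i j H H0 H1) t). Qed.

Lemma rbraid : forall i t, 1 <= i -> i <= n - 2 ->
  teq (L (Rh i) :: L (Rh (S i)) :: L (Rh i) :: t) (L (Rh (S i)) :: L (Rh i) :: L (Rh (S i)) :: t).
Proof. intros. exact (rel_t _ _ _ (r_rbraid n i H H0) t). Qed.

Lemma srcomm : forall i j t, 1 <= i <= n - 1 -> 1 <= j <= n - 1 -> far i j ->
  teq (L (Sg i) :: L (Rh j) :: t) (L (Rh j) :: L (Sg i) :: t).
Proof. intros. exact (rel_t _ _ _ (r_srcomm n i j H H0 H1) t). Qed.

Lemma s'rcomm : forall i j t, 1 <= i <= n - 1 -> 1 <= j <= n - 1 -> far i j ->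
  teq (Li (Sg i) :: L (Rh j) :: t) (L (Rh j) :: Li (Sg i) :: t).
Proof.
  intros. pose proof (rel_inv_t _ _ _ (r_srcomm n i j H H0 H1) t). simpl in H2.
  rewrite <- (rinv j) by lia. rewrite <- (rinv j (Li (Sg i) :: t)) by lia. symmetry. exact H2.
Qed.

Lemma mixed_conj : forall p t, 1 <= p -> p <= n - 2 ->
  teq (L (Rh p) :: L (Rh (S p)) :: Li (Sg p) :: L (Rh (S p)) :: L (Rh p) :: t) (Li (Sg (S p)) :: t).
Proof.
  intros p t H1 H2.
  pose proof (rel_inv_t _ _ _ (r_mixed n p H1 H2) t) as H. simpl in H.
  rewrite (rinv (S p)) in H by lia. rewrite (rinv p) in H by lia.
  rewrite (rinv p) in H by lia. rewrite (rinv (S p)) in H by lia.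
  rewrite H. rewrite rr by lia. rewrite rr by lia. reflexivity.
Qed.

End T.


Lemma rhoseq_0 : forall p, rhoseq p (S p) = [].
Proof. intros. unfold rhoseq. rewrite Nat.sub_diag. reflexivity. Qed.

Lemma rhoseq_S : forall p q, p < q -> rhoseq p (S q) = L (Rh q) :: rhoseq p q.
Proof.
  intros p q H. unfold rhoseq.
  replace (S q - S p) with (S (q - S p)) by lia.
  rewrite seq_S, rev_app_distr. simpl. f_equal. f_equal. f_equal. lia.
Qed.

Lemma rhoseq_low : forall p q, S p < q -> rhoseq p q = rhoseq (S p) q ++ [L (Rh (S p))].
Proof.
  intros p q H. unfold rhoseq.
  replace (q - S p) with (S (q - S (S p))) by lia. simpl. rewrite map_app. reflexivity.
Qed.

Lemma in_rhoseq : forall p q x, In x (rhoseq p q) -> exists k, x = L (Rh k) /\ S p <= k < q.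
Proof.
  intros p q x H. unfold rhoseq in H. apply in_map_iff in H. destruct H as [k [<- Hk]].
  apply in_rev, in_seq in Hk. exists k. split; [reflexivity|lia].
Qed.

Arguments rhoseq : simpl never.

Section T.
Variable n : nat.
Local Notation teq := (grp_eq (tvb_rel n)).

Lemma comm_list : forall x r t, (forall y, In y r -> forall s, teq (x :: y :: s) (y :: x :: s)) ->
  teq (x :: r ++ t) (r ++ x :: t).
Proof.
  intros x r. induction r as [|y r IH]; intros t H; simpl.
  - reflexivity.
  - rewrite H by (left; reflexivity). rewrite IH. reflexivity. intros; apply H; right; auto.
Qed.

Definition rlist (r : word tgen) := forall y, In y r -> exists k, y = L (Rh k) /\ 1 <= k <= n - 1.

Lemma RR : forall r t, rlist r -> teq (r ++ rev r ++ t) t.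
Proof.
  induction r as [|a r IH]; intros t H; simpl. reflexivity.
  destruct (H a (or_introl eq_refl)) as [k [-> Hk]].
  rewrite <- app_assoc. simpl. rewrite IH. apply rr; auto.
  intros y Hy; apply H; right; auto.
Qed.

Lemma RR' : forall r t, rlist r -> teq (rev r ++ r ++ t) t.
Proof.
  intros r t H. rewrite <- (rev_involutive r) at 2. apply RR.
  intros y Hy. apply H. apply in_rev. exact Hy.
Qed.

Lemma rlist_rhoseq : forall p q, 1 <= p -> q <= n -> rlist (rhoseq p q).
Proof. intros p q Hp Hq y Hy. destruct (in_rhoseq _ _ _ Hy) as [k [-> Hk]]. exists k. split; auto; lia. Qed.

Lemma rho_far_rhoseq : forall m p q t, 1 <= m <= n - 1 -> 1 <= p -> q <= n ->
  (m + 1 <= p \/ q + 1 <= m) ->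
  teq (L (Rh m) :: rhoseq p q ++ t) (rhoseq p q ++ L (Rh m) :: t).
Proof.
  intros. apply comm_list. intros y Hy s. destruct (in_rhoseq _ _ _ Hy) as [k [-> Hk]].
  apply rcomm; unfold far; lia.
Qed.

Lemma rho_far_rhoseq_rev : forall m p q t, 1 <= m <= n - 1 -> 1 <= p -> q <= n ->
  (m + 1 <= p \/ q + 1 <= m) ->
  teq (L (Rh m) :: rev (rhoseq p q) ++ t) (rev (rhoseq p q) ++ L (Rh m) :: t).
Proof.
  intros. apply comm_list. intros y Hy s. apply in_rev in Hy. destruct (in_rhoseq _ _ _ Hy) as [k [-> Hk]].
  apply rcomm; unfold far; lia.
Qed.

Lemma shift_rhoseq : forall d m p t, 1 <= p -> p + 1 <= m -> m + 2 + d <= n ->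
  teq (L (Rh m) :: rhoseq p (m + 2 + d) ++ t) (rhoseq p (m + 2 + d) ++ L (Rh (S m)) :: t).
Proof.
  induction d; intros m p t Hp Hm Hn.
  - replace (m + 2 + 0) with (S (S m)) by lia.
    rewrite rhoseq_S by lia. rewrite rhoseq_S by lia. simpl.
    rewrite rbraid by lia.
    rewrite (rho_far_rhoseq (S m) p m) by lia. reflexivity.
  - replace (m + 2 + S d) with (S (m + 2 + d)) by lia.
    rewrite rhoseq_S by lia. simpl.
    rewrite rcomm by (unfold far; lia). rewrite IHd by lia. reflexivity.
Qed.

Lemma shift_rhoseq_rev : forall d m p t, 1 <= p -> p + 1 <= m -> m + 2 + d <= n ->
  teq (L (Rh (S m)) :: rev (rhoseq p (m + 2 + d)) ++ t) (rev (rhoseq p (m + 2 + d)) ++ L (Rh m) :: t).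
Proof.
  intros d m p t Hp Hm Hn. set (r := rhoseq p (m + 2 + d)).
  assert (Hr : rlist r) by (apply rlist_rhoseq; lia).
  symmetry.
  transitivity (rev r ++ L (Rh m) :: r ++ rev r ++ t).
  { rewrite (RR r t Hr). reflexivity. }
  unfold r. rewrite (shift_rhoseq d m p) by lia. fold r.
  rewrite app_comm_cons. rewrite app_assoc. rewrite app_assoc. rewrite <- (app_assoc (rev r) r). rewrite (RR' r) by auto. reflexivity.
Qed.

End T.

Arguments rhoseq : simpl never.

Definition X (b : bool) (p : nat) : word tgen := if b then lam_down p else lam_up p.
Definition lamX (b : bool) (p q : nat) : word tgen := rhoseq p q ++ X b p ++ rev (rhoseq p q).

Section T.
Variable n : nat.
Local Notation teq := (grp_eq (tvb_rel n)).

Lemma X_far : forall b m p t, 1 <= m <= n - 1 -> 1 <= p <= n - 1 -> far m p ->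
  teq (L (Rh m) :: X b p ++ t) (X b p ++ L (Rh m) :: t).
Proof.
  intros b m p t Hm Hp Hf. apply comm_list. intros y Hy s.
  assert (y = L (Rh p) \/ y = Li (Sg p)) as [->| ->].
  { destruct b; simpl in Hy; intuition. }
  - apply rcomm; auto.
  - symmetry. apply s'rcomm; auto. unfold far in *; lia.
Qed.

Lemma E_X : forall b p s, 1 <= p -> p <= n - 2 ->
  teq (L (Rh p) :: L (Rh (S p)) :: X b p ++ L (Rh (S p)) :: L (Rh p) :: s) (X b (S p) ++ s).
Proof.
  intros b p s H1 H2. destruct b; simpl.
  - rewrite (rr n p) by lia. rewrite (rbraid n p) by lia.
    rewrite mixed_conj by lia. rewrite (rr n (S p)) by lia. reflexivity.
  - rewrite rbraid by lia. rewrite mixed_conj by lia. reflexivity.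
Qed.

Lemma X_swap : forall b p s, 1 <= p <= n - 1 ->
  teq (L (Rh p) :: X b p ++ L (Rh p) :: s) (X (negb b) p ++ s).
Proof.
  intros b p s H. destruct b; simpl.
  - rewrite rr by lia. rewrite rr by lia. reflexivity.
  - reflexivity.
Qed.

Ltac nrm := repeat (rewrite <- ?app_assoc; simpl).

Lemma cX_far : forall b m p q t, 1 <= m <= n - 1 -> 1 <= p -> p < q -> q <= n ->
  (m + 2 <= p \/ q + 1 <= m) ->
  teq (L (Rh m) :: lamX b p q ++ L (Rh m) :: t) (lamX b p q ++ t).
Proof.
  intros. unfold lamX. rewrite <- !app_assoc.
  rewrite rho_far_rhoseq by lia. rewrite X_far by (unfold far; lia).
  rewrite rho_far_rhoseq_rev by lia. rewrite rr by lia. reflexivity.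
Qed.

Lemma cX_mid : forall b m p q t, 1 <= p -> p + 1 <= m -> m + 2 <= q -> q <= n ->
  teq (L (Rh m) :: lamX b p q ++ L (Rh m) :: t) (lamX b p q ++ t).
Proof.
  intros. unfold lamX. rewrite <- !app_assoc.
  replace q with (m + 2 + (q - m - 2)) by lia.
  rewrite shift_rhoseq by lia. rewrite X_far by (unfold far; lia).
  rewrite shift_rhoseq_rev by lia. rewrite rr by lia. reflexivity.
Qed.

Lemma cX_top : forall b p q t, 1 <= p -> p < q -> q <= n - 1 ->
  teq (L (Rh q) :: lamX b p q ++ L (Rh q) :: t) (lamX b p (S q) ++ t).
Proof.
  intros. unfold lamX. rewrite rhoseq_S by lia. simpl. rewrite <- !app_assoc. reflexivity.
Qed.

Lemma cX_top' : forall b p q t, 1 <= p -> p < q -> S q <= n ->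
  teq (L (Rh q) :: lamX b p (S q) ++ L (Rh q) :: t) (lamX b p q ++ t).
Proof.
  intros. unfold lamX. rewrite rhoseq_S by lia. simpl. rewrite rr by lia. rewrite <- !app_assoc. simpl.
  rewrite rr by lia. reflexivity.
Qed.

Lemma cX_swap : forall b p t, 1 <= p <= n - 1 ->
  teq (L (Rh p) :: lamX b p (S p) ++ L (Rh p) :: t) (lamX (negb b) p (S p) ++ t).
Proof.
  intros. unfold lamX. rewrite rhoseq_0. simpl. rewrite !app_nil_r. apply X_swap; auto.
Qed.

Lemma cX_low : forall b p q t, 1 <= p -> S p < q -> q <= n ->
  teq (L (Rh p) :: lamX b p q ++ L (Rh p) :: t) (lamX b (S p) q ++ t).
Proof.
  intros. unfold lamX. rewrite rhoseq_low by lia. rewrite rev_app_distr. simpl.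
  rewrite <- !app_assoc. simpl.
  rewrite rho_far_rhoseq by lia.
  rewrite <- (rho_far_rhoseq_rev n p (S p) q) by lia.
  rewrite E_X by lia. reflexivity.
Qed.

Lemma cX_low' : forall b p q t, 1 <= p -> S p < q -> q <= n ->
  teq (L (Rh p) :: lamX b (S p) q ++ L (Rh p) :: t) (lamX b p q ++ t).
Proof.
  intros. unfold lamX. rewrite (rhoseq_low p q) by lia. rewrite rev_app_distr. simpl.
  rewrite <- !app_assoc. simpl.
  rewrite rho_far_rhoseq by lia.
  rewrite <- (rho_far_rhoseq_rev n p (S p) q) by lia.
  apply ge_app; [reflexivity|].
  rewrite <- (E_X b p) by lia.
  rewrite rr by lia. rewrite rr by lia. reflexivity.
Qed.

End T.

Arguments rhoseq : simpl never.

Lemma lam_lt : forall a b, a < b -> lam a b = lamX false a b.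
Proof. intros. unfold lam. rewrite (proj2 (Nat.ltb_lt _ _) H). reflexivity. Qed.
Lemma lam_gt : forall a b, a < b -> lam b a = lamX true a b.
Proof. intros. unfold lam. rewrite (proj2 (Nat.ltb_ge _ _)) by lia. reflexivity. Qed.

Ltac sw := unfold tswap; repeat (match goal with |- context [?a =? ?b] =>
  lazymatch a with context [Nat.eqb] => fail | _ => lazymatch b with context [Nat.eqb] => fail | _ =>
  destruct (Nat.eqb_spec a b); cbv iota beta end end end); try lia.

Section T.
Variable n : nat.
Local Notation teq := (grp_eq (tvb_rel n)).

Lemma P_X : forall b m p q t, 1 <= m <= n - 1 -> 1 <= p -> p < q -> q <= n ->
  teq (L (Rh m) :: lamX b p q ++ L (Rh m) :: t)
      (lam (tswap m (if b then q else p)) (tswap m (if b then p else q)) ++ t).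
Proof.
  intros b m p q t Hm Hp Hpq Hq.
  assert (Hc : m + 2 <= p \/ q + 1 <= m \/ m + 1 = p \/ (m = p /\ q = S p) \/ (m = p /\ S p < q)
     \/ (p + 1 <= m /\ m + 2 <= q) \/ (m + 1 = q /\ p < m) \/ m = q) by lia.
  destruct b; cbv iota; destruct Hc as [Hc|[Hc|[Hc|[Hc|[Hc|[Hc|[Hc|Hc]]]]]]].
  all: try (replace (tswap m p) with p by sw; replace (tswap m q) with q by sw;
    first [rewrite lam_gt by lia | rewrite lam_lt by lia]; first [apply cX_far; lia | apply cX_mid; lia]).
  all: try (replace (tswap m p) with m by sw; replace (tswap m q) with q by sw;
    replace p with (S m) by lia;
    first [rewrite lam_gt by lia | rewrite lam_lt by lia]; apply cX_low'; lia).
  all: try (destruct Hc as [H1 H2]; replace (tswap m p) with (S p) by sw; replace (tswap m q) with p by sw;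
    replace m with p by lia; replace q with (S p) by lia;
    first [rewrite lam_gt by lia | rewrite lam_lt by lia]; first [apply (cX_swap n true p); lia | apply (cX_swap n false p); lia]).
  all: try (destruct Hc as [H1 H2]; replace (tswap m p) with (S p) by sw; replace (tswap m q) with q by sw;
    replace m with p by lia;
    first [rewrite lam_gt by lia | rewrite lam_lt by lia]; apply cX_low; lia).
  all: try (destruct Hc as [H1 H2]; replace (tswap m p) with p by sw; replace (tswap m q) with m by sw;
    replace q with (S m) by lia;
    first [rewrite lam_gt by lia | rewrite lam_lt by lia]; apply cX_top'; lia).
  all: try (replace (tswap m p) with p by sw; replace (tswap m q) with (S q) by sw;
    replace m with q by lia;
    first [rewrite lam_gt by lia | rewrite lam_lt by lia]; apply cX_top; lia).
Qed.

Lemma P : forall m i j t, 1 <= m <= n - 1 -> 1 <= i <= n -> 1 <= j <= n -> i <> j ->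
  teq (L (Rh m) :: lam i j ++ L (Rh m) :: t) (lam (tswap m i) (tswap m j) ++ t).
Proof.
  intros m i j t Hm Hi Hj Hij.
  destruct (Nat.lt_ge_cases i j).
  - rewrite (lam_lt i j) by lia. apply (P_X false); lia.
  - rewrite (lam_gt j i) by lia. apply (P_X true); lia.
Qed.

End T.

Arguments rhoseq : simpl never.


Lemma tswap_invol : forall m x, tswap m (tswap m x) = x.
Proof. intros. sw. Qed.

Lemma map_tswap_invol : forall m t, map (tswap m) (map (tswap m) t) = t.
Proof. intros. rewrite map_map. rewrite <- (map_id t) at 2. apply map_ext. apply tswap_invol. Qed.

Section O.
Variable n : nat.

Definition vt (b : nat) (t : list nat) := NoDup t /\ (forall x, In x t -> b <= x <= n).

Lemma vt_map : forall b m t, vt b t -> b <= m -> m < n -> vt b (map (tswap m) t).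
Proof.
  intros b m t [Hnd Hr] Hb Hm. split.
  - apply (NoDup_map_inv (tswap m)). rewrite map_tswap_invol. exact Hnd.
  - intros x Hx. apply in_map_iff in Hx. destruct Hx as [y [<- Hy]]. apply Hr in Hy. sw.
Qed.

Lemma orbit : forall r b (Q : list nat -> Prop),
  (forall t m, length t = r -> vt b t -> b <= m -> m < n -> Q t -> Q (map (tswap m) t)) ->
  Q (seq b r) -> forall t, length t = r -> vt b t -> Q t.
Proof.
  induction r; intros b Q Hcl Hbase t Hlen Hvt.
  - destruct t; [exact Hbase | discriminate].
  - destruct t as [|a t]; [discriminate|]. simpl in Hlen. injection Hlen as Hlen.
    assert (Hgen : forall d a t, a = b + d -> length t = r -> vt b (a :: t) -> Q (a :: t)).
    2: { apply (Hgen (a - b)); auto. destruct Hvt as [_ Hr]. specialize (Hr a (or_introl eq_refl)). lia. }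
    clear a t Hlen Hvt.
    induction d; intros a t Ha Hlen Hvt.
    + subst a. rewrite Nat.add_0_r.
      apply (IHr (S b) (fun t => Q (b :: t))).
      * intros t' m Hl Hv Hb Hm HQ.
        assert (Hv' : vt b (b :: t')).
        { destruct Hv as [Hnd Hr]. split.
          - constructor; auto. intro Hin. apply Hr in Hin. lia.
          - intros x [<-|Hx]; [|apply Hr in Hx]; lia. }
        pose proof (Hcl (b :: t') m) as H. simpl in H. replace (tswap m b) with b in H by sw.
        apply H; auto; lia.
      * exact Hbase.
      * exact Hlen.
      * destruct Hvt as [Hnd Hr]. inversion Hnd; subst. split; auto.
        intros x Hx. assert (x <> b) by (intro Heq; subst x; rewrite Nat.add_0_r in *; tauto). specialize (Hr x (or_intror Hx)). lia.
    + set (t2 := map (tswap (b + d)) (a :: t)).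
      assert (Hb : b + d < n) by (destruct Hvt as [_ Hr]; specialize (Hr a (or_introl eq_refl)); lia).
      assert (HQ2 : Q t2).
      { unfold t2. simpl. apply IHd.
        - sw.
        - rewrite length_map; auto.
        - pose proof (vt_map b (b + d) (a :: t) Hvt ltac:(lia) Hb) as H. exact H. }
      pose proof (Hcl t2 (b + d)) as H. unfold t2 in H. rewrite map_tswap_invol in H.
      apply H; auto; try lia.
      * simpl. rewrite length_map; auto.
      * apply vt_map; auto; lia.
Qed.

End O.

Arguments rhoseq : simpl never.

Section T.
Variable n : nat.
Local Notation teq := (grp_eq (tvb_rel n)).

Lemma ss'comm : forall i j t, 1 <= i <= n - 1 -> 1 <= j <= n - 1 -> far i j ->
  teq (Li (Sg i) :: Li (Sg j) :: t) (Li (Sg j) :: Li (Sg i) :: t).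
Proof.
  intros. pose proof (rel_inv_t _ _ _ (r_scomm n i j H H0 H1) t). simpl in H2. symmetry. exact H2.
Qed.

Lemma braid' : forall i t, 1 <= i -> i <= n - 2 ->
  teq (Li (Sg i) :: Li (Sg (S i)) :: Li (Sg i) :: t) (Li (Sg (S i)) :: Li (Sg i) :: Li (Sg (S i)) :: t).
Proof.
  intros. pose proof (rel_inv_t _ _ _ (r_braid n i H H0) t). simpl in H1. exact H1.
Qed.

Lemma mixed' : forall i t, 1 <= i -> i <= n - 2 ->
  teq (Li (Sg i) :: L (Rh (S i)) :: L (Rh i) :: t) (L (Rh (S i)) :: L (Rh i) :: Li (Sg (S i)) :: t).
Proof.
  intros. pose proof (rel_inv_t _ _ _ (r_mixed n i H H0) t). simpl in H1.
  rewrite !rinv in H1 by lia. exact H1.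
Qed.

Lemma base_comm : forall s, 4 <= n ->
  teq (lam 1 2 ++ lam 3 4 ++ s) (lam 3 4 ++ lam 1 2 ++ s).
Proof.
  intros s Hn. unfold lam, rhoseq. simpl.
  rewrite (s'rcomm n 1 3) by (unfold far; lia).
  rewrite (ss'comm 1 3) by (unfold far; lia).
  rewrite (rcomm n 1 3) by (unfold far; lia).
  rewrite <- (s'rcomm n 3 1) by (unfold far; lia). reflexivity.
Qed.

Lemma base_yb : forall s, 3 <= n ->
  teq (lam 1 2 ++ lam 1 3 ++ lam 2 3 ++ s) (lam 2 3 ++ lam 1 3 ++ lam 1 2 ++ s).
Proof.
  intros s Hn. unfold lam, rhoseq. simpl.
  apply (cancel_left _ [L (Rh 1); L (Rh 2); L (Rh 1)]). simpl.
  transitivity (Li (Sg 1) :: Li (Sg 2) :: Li (Sg 1) :: s).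
  - rewrite (rbraid n 1) by lia.
    rewrite (rr n 2 (Li (Sg 2) :: s)) by lia.
    rewrite <- (rbraid n 1) by lia. rewrite (rr n 1) by lia.
    rewrite (mixed_conj n 1) by lia.
    rewrite <- (braid' 1) by lia. reflexivity.
  - rewrite (rbraid n 1) by lia. rewrite (rr n 2) by lia.
    rewrite <- (mixed' 1) by lia.
    rewrite <- (rbraid n 1) by lia. rewrite (rr n 1) by lia.
    rewrite (mixed_conj n 1) by lia. reflexivity.
Qed.

End T.

Arguments rhoseq : simpl never.

Section T.
Variable n : nat.
Local Notation teq := (grp_eq (tvb_rel n)).

Definition ok (i j : nat) := 1 <= i <= n /\ 1 <= j <= n /\ i <> j.

Lemma conj1 : forall m i j s, 1 <= m <= n - 1 -> ok i j ->
  teq (lam (tswap m i) (tswap m j) ++ s) (L (Rh m) :: lam i j ++ L (Rh m) :: s).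
Proof. intros m i j s Hm [Hi [Hj Hij]]. symmetry. apply P; auto. Qed.

Lemma conj2 : forall m i j k l s, 1 <= m <= n - 1 -> ok i j -> ok k l ->
  teq (lam (tswap m i) (tswap m j) ++ lam (tswap m k) (tswap m l) ++ s)
      (L (Rh m) :: lam i j ++ lam k l ++ L (Rh m) :: s).
Proof.
  intros. rewrite (conj1 m k l s) by auto. rewrite (conj1 m i j) by auto.
  rewrite (rr n m) by lia. reflexivity.
Qed.

Lemma conj3 : forall m i j k l a b s, 1 <= m <= n - 1 -> ok i j -> ok k l -> ok a b ->
  teq (lam (tswap m i) (tswap m j) ++ lam (tswap m k) (tswap m l) ++ lam (tswap m a) (tswap m b) ++ s)
      (L (Rh m) :: lam i j ++ lam k l ++ lam a b ++ L (Rh m) :: s).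
Proof.
  intros. rewrite (conj1 m a b s) by auto. rewrite (conj1 m k l) by auto.
  rewrite (rr n m) by lia. rewrite (conj1 m i j) by auto. rewrite (rr n m) by lia. reflexivity.
Qed.

Definition Qc (t : list nat) : Prop :=
  match t with [i; j; k; l] => forall s, teq (lam i j ++ lam k l ++ s) (lam k l ++ lam i j ++ s)
  | _ => True end.

Definition Qy (t : list nat) : Prop :=
  match t with [k; i; j] => forall s, teq (lam k i ++ lam k j ++ lam i j ++ s) (lam i j ++ lam k j ++ lam k i ++ s)
  | _ => True end.

Lemma nodup4 : forall i j k l : nat, NoDup [i; j; k; l] -> i <> j /\ i <> k /\ i <> l /\ j <> k /\ j <> l /\ k <> l.
Proof.
  intros. inversion H; subst. inversion H3; subst. inversion H5; subst. simpl in *. intuition.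
Qed.

Lemma nodup3 : forall i j k : nat, NoDup [i; j; k] -> i <> j /\ i <> k /\ j <> k.
Proof.
  intros. inversion H; subst. inversion H3; subst. simpl in *. intuition.
Qed.

Lemma Qc_all : forall t, length t = 4 -> vt n 1 t -> Qc t.
Proof.
  intros t Hl Hv.
  assert (H4 : 4 <= n).
  { destruct t as [|i [|j [|k [|l [|]]]]]; try discriminate. destruct Hv as [Hnd Hr].
    apply nodup4 in Hnd.
    assert (Hi := Hr i ltac:(simpl; tauto)). assert (Hj := Hr j ltac:(simpl; tauto)).
    assert (Hk := Hr k ltac:(simpl; tauto)). assert (Hl' := Hr l ltac:(simpl; tauto)).
    lia. }
  apply (orbit n 4 1 Qc); auto.
  - intros t' m Hl' Hv' Hm Hmn HQ.
    destruct t' as [|i [|j [|k [|l [|]]]]]; try discriminate. simpl in HQ |- *.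
    destruct Hv' as [Hnd Hr]. apply nodup4 in Hnd.
    assert (Hi := Hr i ltac:(simpl; tauto)). assert (Hj := Hr j ltac:(simpl; tauto)).
    assert (Hk := Hr k ltac:(simpl; tauto)). assert (Hl'' := Hr l ltac:(simpl; tauto)).
    clear Hr. intros s. rewrite conj2 by (unfold ok; lia).
    rewrite conj2 by (unfold ok; lia). rewrite HQ. reflexivity.
  - simpl. intros s. apply base_comm; auto.
Qed.

Lemma Qy_all : forall t, length t = 3 -> vt n 1 t -> Qy t.
Proof.
  intros t Hl Hv.
  assert (H3 : 3 <= n).
  { destruct t as [|i [|j [|k [|]]]]; try discriminate. destruct Hv as [Hnd Hr].
    apply nodup3 in Hnd.
    assert (Hi := Hr i ltac:(simpl; tauto)). assert (Hj := Hr j ltac:(simpl; tauto)).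
    assert (Hk := Hr k ltac:(simpl; tauto)).
    lia. }
  apply (orbit n 3 1 Qy); auto.
  - intros t' m Hl' Hv' Hm Hmn HQ.
    destruct t' as [|k [|i [|j [|]]]]; try discriminate. simpl in HQ |- *.
    destruct Hv' as [Hnd Hr]. apply nodup3 in Hnd.
    assert (Hi := Hr i ltac:(simpl; tauto)). assert (Hj := Hr j ltac:(simpl; tauto)).
    assert (Hk := Hr k ltac:(simpl; tauto)).
    clear Hr. intros s. rewrite conj3 by (unfold ok; lia).
    rewrite conj3 by (unfold ok; lia). rewrite HQ. reflexivity.
  - simpl. intros s. apply base_yb; auto.
Qed.

Lemma phi_app : forall u v, phi (u ++ v) = phi u ++ phi v.
Proof. intros. unfold phi. apply flat_map_app. Qed.

Lemma vt4 : forall i j k l, idx n i -> idx n j -> idx n k -> idx n l ->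
    i <> j -> i <> k -> i <> l -> j <> k -> j <> l -> k <> l -> vt n 1 [i; j; k; l].
Proof.
  unfold idx; intros. split.
  - constructor. simpl. intros [?|[?|[?|[]]]]; lia.
    constructor. simpl. intros [?|[?|[]]]; lia.
    constructor. simpl. intros [?|[]]; lia.
    constructor. simpl; tauto. constructor.
  - simpl. intros x [<-|[<-|[<-|[<-|[]]]]]; lia.
Qed.

Lemma vt3 : forall i j k, idx n i -> idx n j -> idx n k ->
    i <> j -> i <> k -> j <> k -> vt n 1 [i; j; k].
Proof.
  unfold idx; intros. split.
  - constructor. simpl. intros [?|[?|[]]]; lia.
    constructor. simpl. intros [?|[]]; lia.
    constructor. simpl; tauto. constructor.
  - simpl. intros x [<-|[<-|[<-|[]]]]; lia.
Qed.

Lemma phi_rel : forall l r, vp_rel n l r -> teq (phi l) (phi r).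
Proof.
  intros l r H. destruct H.
  - pose proof (Qc_all [i; j; k; l] eq_refl (vt4 i j k l H H0 H1 H2 H3 H4 H5 H6 H7 H8) []) as Q.
    simpl in Q. simpl. exact Q.
  - pose proof (Qy_all [k; i; j] eq_refl (vt3 k i j H1 H H0 (not_eq_sym H3) (not_eq_sym H4) H2) []) as Q.
    simpl in Q. simpl. exact Q.
Qed.

Lemma part1 : forall w w', vp_eq n w w' -> teq (phi w) (phi w').
Proof.
  induction 1.
  - reflexivity.
  - symmetry; auto.
  - etransitivity; eauto.
  - rewrite !phi_app. simpl. apply ge_app; [reflexivity|].
    destruct a as [x y]. destruct b; simpl; rewrite app_assoc.
    + rewrite <- (winv_invol (lam x y)) at 2. rewrite inv_r. reflexivity.
    + rewrite inv_r. reflexivity.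
  - rewrite !phi_app. rewrite (phi_rel _ _ H). reflexivity.
Qed.

End T.

Arguments rhoseq : simpl never.


Lemma tswap_l : forall i, tswap i i = S i.
Proof. intros; sw. Qed.
Lemma tswap_r : forall i, tswap i (S i) = i.
Proof. intros; sw. Qed.
Lemma tswap_o : forall i k, k <> i -> k <> S i -> tswap i k = k.
Proof. intros; sw. Qed.

Ltac swr := repeat (rewrite ?tswap_l, ?tswap_r, ?tswap_invol; try (match goal with |- context [tswap ?i ?k] =>
   rewrite (tswap_o i k) by lia end)).

Lemma perm_act_app : forall u v m, perm_act (u ++ v) m = perm_act u (perm_act v m).
Proof. intros. unfold perm_act. rewrite fold_right_app. reflexivity. Qed.

Lemma gen_act_invol : forall x m, gen_act x (gen_act x m) = m.
Proof. destruct x; simpl; intros; auto; apply tswap_invol. Qed.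

Lemma pa_rev : forall t m, perm_act (rev t) (perm_act t m) = m.
Proof.
  induction t as [|a t IH]; intros m. reflexivity.
  simpl rev. rewrite perm_act_app. simpl. rewrite gen_act_invol. apply IH.
Qed.

Lemma pa_rev' : forall t m, perm_act t (perm_act (rev t) m) = m.
Proof. intros. rewrite <- (rev_involutive t) at 1. apply pa_rev. Qed.

Lemma pa_flip : forall t m, perm_act (map (fun p => (negb (fst p), snd p)) t) m = perm_act t m.
Proof. induction t; intros; simpl; auto. Qed.

Lemma pa_winv : forall t m, perm_act (winv t) m = perm_act (rev t) m.
Proof. intros. unfold winv. rewrite <- map_rev. apply pa_flip. Qed.

Lemma pa_lam : forall k l m, perm_act (lam k l) m = m.
Proof.
  intros. unfold lam. destruct (k <? l); rewrite !perm_act_app; simpl; rewrite ?tswap_invol; apply pa_rev'.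
Qed.

Lemma pa_winv_lam : forall k l m, perm_act (winv (lam k l)) m = m.
Proof. intros. rewrite pa_winv. transitivity (perm_act (rev (lam k l)) (perm_act (lam k l) m)). rewrite pa_lam; reflexivity. apply pa_rev. Qed.

Lemma part2 : forall n w, in_TVP n (phi w).
Proof.
  intros n w m _. induction w as [|[b [k l]] w IH]; simpl. reflexivity.
  rewrite perm_act_app, IH. destruct b. apply pa_winv_lam. apply pa_lam.
Qed.

Arguments rhoseq : simpl never.

Inductive st := St (p : nat -> nat) (d : nat -> bool) (w : word vgen).

Definition Rw (p : nat -> nat) (d : nat -> bool) (i : nat) : word vgen :=
  match d i, d (S i) with
  | false, false => [V (p i) (p (S i))]
  | true, true => [V (p (S i)) (p i)]
  | _, _ => []
  end.

Section M.
Variable n : nat.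

Definition vi (i : nat) : bool := (1 <=? i) && (i <? n).
Definition vj (j : nat) : bool := (1 <=? j) && (j <=? n).

Definition step (s : st) (a : bool * tgen) : st :=
  match s with St p d w =>
  match a with
  | (b, Sg i) => if vi i then
      if b then St (fun k => p (tswap i k)) (fun k => d (tswap i k))
                   (w ++ Rw (fun k => p (tswap i k)) (fun k => d (tswap i k)) i)
      else St (fun k => p (tswap i k)) (fun k => d (tswap i k)) (w ++ winv (Rw p d i))
    else s
  | (_, Rh i) => if vi i then St (fun k => p (tswap i k)) (fun k => d (tswap i k)) w else s
  | (_, Gm j) => if vj j then St p (fun k => xorb (d k) (k =? j)) w else s
  end end.

Definition run (t : word tgen) (s : st) : st := fold_left step t s.

Lemma run_app : forall u v s, run (u ++ v) s = run v (run u s).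
Proof. intros. unfold run. apply fold_left_app. Qed.

Definition sim (s s' : st) : Prop :=
  match s, s' with St p d w, St p' d' w' => p = p' /\ d = d' /\ vp_eq n w w' end.

Lemma sim_refl : forall s, sim s s.
Proof. destruct s; simpl; repeat split; reflexivity. Qed.
Lemma sim_sym : forall s s', sim s s' -> sim s' s.
Proof. destruct s, s'; simpl; intros [? [? ?]]; repeat split; auto. symmetry; auto. Qed.
Lemma sim_trans : forall s s' s'', sim s s' -> sim s' s'' -> sim s s''.
Proof. destruct s, s', s''; simpl; intros [? [? ?]] [? [? ?]]; repeat split; try congruence. etransitivity; eauto. Qed.

Lemma step_sim : forall s s' a, sim s s' -> sim (step s a) (step s' a).
Proof.
  intros [p d w] [p' d' w'] [b x] [<- [<- H]]. destruct x; simpl.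
  - destruct (vi i); [destruct b|]; simpl; repeat split; try rewrite H; reflexivity.
  - destruct (vi i); simpl; repeat split; auto.
  - destruct (vj j); simpl; repeat split; auto.
Qed.

Lemma run_sim : forall t s s', sim s s' -> sim (run t s) (run t s').
Proof. induction t; intros; simpl; auto. apply IHt. apply step_sim. auto. Qed.

Definition Inv (s : st) : Prop :=
  match s with St p _ _ => (forall k, 1 <= k <= n -> 1 <= p k <= n) /\
    (forall k l, 1 <= k <= n -> 1 <= l <= n -> p k = p l -> k = l) end.

Lemma vi_true : forall i, vi i = true -> 1 <= i /\ i < n.
Proof. unfold vi; intros. apply andb_prop in H. destruct H. apply Nat.leb_le in H. apply Nat.ltb_lt in H0. lia. Qed.

Lemma inv_swap : forall i p, 1 <= i -> i < n ->
  (forall k, 1 <= k <= n -> 1 <= p k <= n) /\ (forall k l, 1 <= k <= n -> 1 <= l <= n -> p k = p l -> k = l) ->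
  (forall k, 1 <= k <= n -> 1 <= p (tswap i k) <= n) /\
  (forall k l, 1 <= k <= n -> 1 <= l <= n -> p (tswap i k) = p (tswap i l) -> k = l).
Proof.
  intros i p Hi Hn [H1 H2]. split.
  - intros k Hk. apply H1. sw.
  - intros k l Hk Hl E. apply H2 in E; [|sw|sw].
    rewrite <- (tswap_invol i k), <- (tswap_invol i l), E. reflexivity.
Qed.

Lemma step_inv : forall s a, Inv s -> Inv (step s a).
Proof.
  intros [p d w] [b x] H. destruct x; simpl.
  - destruct (vi i) eqn:E; [destruct b|]; simpl; auto; apply vi_true in E; apply inv_swap; auto; lia.
  - destruct (vi i) eqn:E; simpl; auto; apply vi_true in E; apply inv_swap; auto; lia.
  - destruct (vj j); simpl; auto.
Qed.

Lemma run_inv : forall t s, Inv s -> Inv (run t s).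
Proof. induction t; intros; simpl; auto. apply IHt. apply step_inv. auto. Qed.

End M.

Arguments rhoseq : simpl never.
Arguments vi : simpl never.
Arguments vj : simpl never.
Arguments Rw : simpl never.

Ltac kt := apply functional_extensionality; let k := fresh "k" in intro k; unfold tswap;
  repeat (match goal with |- context [?a =? ?b] =>
  lazymatch a with context [Nat.eqb] => fail | _ => lazymatch b with context [Nat.eqb] => fail | _ =>
  destruct (Nat.eqb_spec a b); cbv iota beta end end end);
  try (exfalso; lia); rewrite ?xorb_false_r, ?xorb_true_r, ?negb_involutive;
  try reflexivity; try (repeat f_equal; lia).

Section R.
Variable n : nat.

Lemma vi_t : forall i, 1 <= i -> i < n -> vi n i = true.
Proof. intros. unfold vi. apply andb_true_intro. split. apply Nat.leb_le; lia. apply Nat.ltb_lt; lia. Qed.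
Lemma vj_t : forall i, 1 <= i -> i <= n -> vj n i = true.
Proof. intros. unfold vj. apply andb_true_intro. split. apply Nat.leb_le; lia. apply Nat.leb_le; lia. Qed.

Lemma inv_rng : forall p d w k, Inv n (St p d w) -> 1 <= k <= n -> idx n (p k).
Proof. intros p d w k [H1 H2] Hk. apply H1; auto. Qed.
Lemma inv_ne : forall p d w a b, Inv n (St p d w) -> 1 <= a <= n -> 1 <= b <= n -> a <> b -> p a <> p b.
Proof. intros p d w a b [H1 H2] Ha Hb Hab E. apply Hab. apply H2; auto. Qed.

Lemma ybi : forall a b c, idx n a -> idx n b -> idx n c -> a <> b -> a <> c -> b <> c ->
  vp_eq n [(true, (a, b)); (true, (a, c)); (true, (b, c))] [(true, (b, c)); (true, (a, c)); (true, (a, b))].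
Proof.
  intros. pose proof (ge_inv _ _ _ (ge_rel (vp_rel n) [] [] _ _ (v_yb n b c a H0 H1 H H4 (not_eq_sym H2) (not_eq_sym H3)))) as E.
  simpl in E. symmetry. exact E.
Qed.

Lemma cmi : forall a b c e, idx n a -> idx n b -> idx n c -> idx n e ->
  a <> b -> a <> c -> a <> e -> b <> c -> b <> e -> c <> e ->
  vp_eq n [(true, (a, b)); (true, (c, e))] [(true, (c, e)); (true, (a, b))].
Proof.
  intros. pose proof (ge_inv _ _ _ (ge_rel (vp_rel n) [] [] _ _ (v_comm n a b c e H H0 H1 H2 H3 H4 H5 H6 H7 H8))) as E.
  simpl in E. symmetry. exact E.
Qed.

Ltac eqbr := repeat match goal with |- context [?a =? ?b] =>
   first [rewrite (proj2 (Nat.eqb_neq a b)) by lia | rewrite (proj2 (Nat.eqb_eq a b)) by lia] end;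
   rewrite ?xorb_false_r, ?xorb_true_r.

Ltac vside Hinv := match goal with
 | |- idx _ (?p ?x) => apply (inv_rng _ _ _ _ Hinv); lia
 | |- ?p ?x <> ?p ?y => apply (inv_ne _ _ _ _ _ Hinv); lia
 | |- ?x <> ?y => let E := fresh in intro E; symmetry in E; revert E; apply (inv_ne _ _ _ _ _ Hinv); lia
 end.

Ltac wclose Hinv := first [ reflexivity
  | apply ybi; vside Hinv | symmetry; apply ybi; vside Hinv | apply cmi; vside Hinv ].

Lemma rel_sim : forall l r, tvb_rel n l r -> forall s, Inv n s -> sim n (run n l s) (run n r s).
Proof.
  intros l r H [p d w] Hinv. destruct H; try unfold far in *;
  repeat progress (simpl; rewrite ?vi_t, ?vj_t by lia); refine (conj _ (conj _ _)); try kt;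
  unfold Rw; swr; eqbr; rewrite <- ?app_assoc; try reflexivity; apply ge_app; try reflexivity;
  repeat match goal with |- context [d ?x] => destruct (d x) end; simpl; wclose Hinv.
Qed.
End R.

Section R2.
Variable n : nat.

Lemma cancel_sim : forall b x s, Inv n s -> sim n (run n [(b, x); (negb b, x)] s) s.
Proof.
  intros b x [p d w] Hinv. destruct x; simpl.
  - destruct (vi n i) eqn:E; [apply vi_true in E; destruct b; simpl; rewrite vi_t by lia; simpl|].
    + refine (conj _ (conj _ _)); try kt. rewrite <- app_assoc. rewrite inv_r, app_nil_r. reflexivity.
    + refine (conj _ (conj _ _)); try kt. unfold Rw. swr. rewrite <- app_assoc. rewrite inv_l, app_nil_r. reflexivity.
    + destruct b; simpl; rewrite E; exact (sim_refl n (St p d w)).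
  - destruct (vi n i) eqn:E; [apply vi_true in E; simpl; rewrite vi_t by lia; simpl|].
    + refine (conj _ (conj _ _)); try kt. reflexivity.
    + simpl; rewrite E; exact (sim_refl n (St p d w)).
  - destruct (vj n j) eqn:E; simpl; rewrite E; simpl.
    + refine (conj _ (conj _ _)); try kt. reflexivity.
    + exact (sim_refl n (St p d w)).
Qed.

Lemma part3_sim : forall u v, grp_eq (tvb_rel n) u v -> forall s, Inv n s -> sim n (run n u s) (run n v s).
Proof.
  induction 1; intros s Hs.
  - apply sim_refl.
  - apply sim_sym; auto.
  - eapply sim_trans; eauto.
  - rewrite !run_app. change ((b, a) :: (negb b, a) :: v) with ([(b, a); (negb b, a)] ++ v).
    rewrite run_app. apply run_sim. apply cancel_sim. apply run_inv; auto.
  - rewrite !run_app. apply run_sim. apply rel_sim; auto. apply run_inv; auto.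
Qed.
End R2.

Arguments rhoseq : simpl never.
Arguments vi : simpl never.
Arguments vj : simpl never.
Arguments Rw : simpl never.

Lemma pa_rhoseq_p : forall p q, p < q -> perm_act (rhoseq p q) p = p.
Proof.
  intros p q H. induction q. lia.
  destruct (Nat.eq_dec q p). subst. rewrite rhoseq_0. reflexivity.
  rewrite rhoseq_S by lia. simpl. rewrite IHq by lia. sw.
Qed.

Lemma pa_rhoseq_Sp : forall p q, p < q -> perm_act (rhoseq p q) (S p) = q.
Proof.
  intros p q H. induction q. lia.
  destruct (Nat.eq_dec q p). subst. rewrite rhoseq_0. reflexivity.
  rewrite rhoseq_S by lia. simpl. rewrite IHq by lia. sw.
Qed.

Section P4.
Variable n : nat.

Definition rl (r : word tgen) := forall y, In y r -> exists b k, y = (b, Rh k) /\ 1 <= k < n.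

Lemma run_rho : forall r p d w, rl r ->
  run n r (St p d w) = St (fun k => p (perm_act r k)) (fun k => d (perm_act r k)) w.
Proof.
  induction r as [|a r IH]; intros p d w H. reflexivity.
  destruct (H a (or_introl eq_refl)) as [b [k [-> Hk]]].
  simpl. rewrite vi_t by lia. rewrite IH. reflexivity.
  intros y Hy; apply H; right; auto.
Qed.

Lemma rl_rhoseq : forall p q, 1 <= p -> q <= n -> rl (rhoseq p q).
Proof. intros p q Hp Hq y Hy. destruct (in_rhoseq _ _ _ Hy) as [k [-> Hk]]. exists false, k. split; auto. lia. Qed.

Lemma rl_rev : forall r, rl r -> rl (rev r).
Proof. intros r H y Hy. apply H. apply in_rev. auto. Qed.

Lemma rl_winv : forall r, rl r -> rl (winv r).
Proof.
  intros r H y Hy. unfold winv in Hy. apply in_rev in Hy. apply in_map_iff in Hy.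
  destruct Hy as [[b x] [<- Hx]]. destruct (H _ Hx) as [b' [k [E Hk]]]. injection E as -> ->.
  exists (negb b'), k. auto.
Qed.

Definition s0 (acc : word vgen) := St (fun k => k) (fun _ => false) acc.

Lemma run_lam : forall k l acc, 1 <= k <= n -> 1 <= l <= n -> k <> l ->
  run n (lam k l) (s0 acc) = s0 (acc ++ [V k l]).
Proof.
  intros k l acc Hk Hl Hkl. unfold s0.
  destruct (Nat.lt_ge_cases k l).
  - rewrite lam_lt by auto. unfold lamX, X. rewrite !run_app.
    rewrite run_rho by (apply rl_rhoseq; lia). repeat progress (simpl; rewrite ?vi_t by lia).
    rewrite run_rho by (apply rl_rev, rl_rhoseq; lia).
    unfold Rw. simpl. rewrite !tswap_invol. rewrite pa_rhoseq_p, pa_rhoseq_Sp by lia.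
    f_equal. apply functional_extensionality; intro x. rewrite tswap_invol. apply pa_rev'.
  - rewrite (lam_gt l k) by lia. unfold lamX, X. rewrite !run_app.
    rewrite run_rho by (apply rl_rhoseq; lia). repeat progress (simpl; rewrite ?vi_t by lia).
    rewrite run_rho by (apply rl_rev, rl_rhoseq; lia).
    unfold Rw. simpl. rewrite !tswap_invol. rewrite tswap_l, tswap_r. rewrite pa_rhoseq_p, pa_rhoseq_Sp by lia.
    f_equal. apply functional_extensionality; intro x. rewrite !tswap_invol. apply pa_rev'.
Qed.

Lemma run_lam_inv : forall k l acc, 1 <= k <= n -> 1 <= l <= n -> k <> l ->
  run n (winv (lam k l)) (s0 acc) = s0 (acc ++ [(true, (k, l))]).
Proof.
  intros k l acc Hk Hl Hkl. unfold s0.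
  destruct (Nat.lt_ge_cases k l).
  - rewrite lam_lt by auto. unfold lamX, X. rewrite !winv_app. rewrite !run_app.
    rewrite run_rho by (apply rl_winv, rl_rev, rl_rhoseq; lia).
    repeat progress (simpl; rewrite ?vi_t by lia).
    rewrite run_rho by (apply rl_winv, rl_rhoseq; lia).
    unfold Rw. simpl. rewrite !pa_winv, rev_involutive. rewrite pa_rhoseq_p, pa_rhoseq_Sp by lia.
    f_equal. apply functional_extensionality; intro x. rewrite !pa_winv, rev_involutive, tswap_invol. apply pa_rev'.
  - rewrite (lam_gt l k) by lia. unfold lamX, X. rewrite !winv_app. rewrite !run_app.
    rewrite run_rho by (apply rl_winv, rl_rev, rl_rhoseq; lia).
    repeat progress (simpl; rewrite ?vi_t by lia).
    rewrite run_rho by (apply rl_winv, rl_rhoseq; lia).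
    unfold Rw. simpl. rewrite !pa_winv, rev_involutive. rewrite tswap_l, tswap_r. rewrite pa_rhoseq_p, pa_rhoseq_Sp by lia.
    f_equal. apply functional_extensionality; intro x. rewrite !pa_winv, rev_involutive, !tswap_invol. apply pa_rev'.
Qed.

Lemma run_phi : forall w acc, vp_valid n w -> run n (phi w) (s0 acc) = s0 (acc ++ w).
Proof.
  induction w as [|[b [k l]] w IH]; intros acc Hv.
  - simpl. rewrite app_nil_r. reflexivity.
  - assert (Hkl : idx n k /\ idx n l /\ k <> l) by (apply (Hv b); left; reflexivity).
    unfold idx in Hkl.
    simpl. rewrite run_app. destruct b.
    + rewrite run_lam_inv by tauto. rewrite IH. rewrite <- app_assoc. reflexivity.
      intros b' i j Hin. apply (Hv b'). right; auto.
    + rewrite run_lam by tauto. rewrite IH. rewrite <- app_assoc. reflexivity.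
      intros b' i j Hin. apply (Hv b'). right; auto.
Qed.

Lemma s0_inv : forall acc, Inv n (s0 acc).
Proof. intros. simpl. split; auto. Qed.

End P4.


Theorem mainTheorem8 (n : nat) (hn : 2 <= n) :
  (forall w w' : word vgen, vp_valid n w -> vp_valid n w' ->
     vp_eq n w w' -> tvb_eq n (phi w) (phi w')) /\
  (forall w : word vgen, vp_valid n w -> in_TVP n (phi w)) /\
  (forall w w' : word vgen, vp_valid n w -> vp_valid n w' ->
     tvb_eq n (phi w) (phi w') -> vp_eq n w w').
Proof.
  split; [|split].
  - intros w w' _ _ Hw. apply part1. exact Hw.
  - intros w _. apply part2.
  - intros w w' Hv Hv' Hw.
    pose proof (part3_sim n _ _ Hw (s0 []) (s0_inv n [])) as HS.
    rewrite !run_phi in HS by auto. simpl in HS. destruct HS as [_ [_ HS]]. exact HS.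
Qed.
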